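(* Let $T$ be a rooted binary tree whose leaves are each coloured black or white, with the colouring extended to all nodes as described in the context, and assume that $T$ contains more than one maximal black subtree. If there exists an SPR operation $(u,v)$ on $T$ whose resulting tree contains at most one maximal black subtree (i.e. the resulting tree is compatible with the data), then that operation belongs to one of the classes $(\mathrm{B},\mathrm{r},\mathrm{B},\ast)$, $(\mathrm{W},\mathrm{r},\mathrm{W},\ast)$, $(\mathrm{W},\mathrm{r},\mathrm{G},\ast)$ or $(\mathrm{W},\mathrm{r},\mathrm{B},\mathrm{r})$.
   Context: All trees are rooted binary trees; every non-leaf node has exactly two children and every non-root node $n$ has a parent $\mathrm{pa}(n)$. A ''subtree'' always means a node together with all of its descendants (so its leaves are leaves of the original tree). Colouring: each leaf is coloured black (B) or white (W) (in the application, black iff the corresponding observed sequence carries allele 1 at the next segregating site). The colouring is extended recursively to all nodes: an internal node is black if both children are black, white if both children are white, and grey (G) otherwise. A subtree is black (resp. white) if all its nodes are black (resp. white); it is maximal if no strictly larger subtree containing it is black (resp. white). Classification: a black or white node is of type ''r'' (subtree root) if it is the root of a maximal subtree of its own colour, and of type ''b'' (branch) otherwise; all grey nodes are of type ''b'' by convention. A tree is called compatible (with the data) if it contains at most one maximal black subtree. SPR operation $(u,v)$ on $T$: $u$ is a non-root node, $v$ is a node of $T$ with $v\notin\{u,\mathrm{pa}(u)\}$ and $v$ not a descendant of $u$; the subtree rooted at $u$ is pruned (the edge to $u$ is removed and $\mathrm{pa}(u)$ is deleted, its other child taking its place), and then regrafted onto the branch above $v$: a new node is inserted on the edge from $v$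 to its parent (or as a new root above $v$ if $v$ is the root) whose two children are $v$ and $u$. Colours of the resulting tree are recomputed by the same rule. The SPR operation $(u,v)$ belongs to the equivalence class $(x,y,z,w)$ where $x,z\in\{\mathrm{B},\mathrm{W},\mathrm{G}\}$ are the colours in $T$ of the pruned node $u$ and regrafting node $v$, and $y,w\in\{\mathrm{r},\mathrm{b}\}$ are their respective classifications in $T$; $\ast$ is a wildcard standing for any value. *)

(* Defs.v *)
From HB Require Import structures.
From mathcomp Require Import all_boot.
Set Implicit Arguments. Unset Strict Implicit. Unset Printing Implicit Defensive.

(* Rooted binary trees; leaves carry a colour: true = black, false = white. *)
Inductive tree := Leaf of bool | Node of tree & tree.

Inductive col := B | W | G.
Definition col_eqb (x y : col) : bool :=
  match x, y with B, B | W, W | G, G => true | _, _ => false end.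
Lemma col_eqP : Equality.axiom col_eqb.
Proof. by case; case; constructor. Qed.
HB.instance Definition _ := hasDecEq.Build col col_eqP.

Fixpoint colour (t : tree) : col :=
  match t with
  | Leaf b => if b then B else W
  | Node l r => let cl := colour l in let cr := colour r in
      if cl == cr then cl else G
  end.

(* Nodes are addressed by paths from the root (false = left, true = right). *)
Fixpoint subt (t : tree) (p : seq bool) : option tree :=
  match p, t with
  | [::], _ => Some t
  | b :: p', Node l r => subt (if b then r else l) p'
  | _ :: _, Leaf _ => None
  end.

Definition is_node (t : tree) (p : seq bool) : bool := isSome (subt t p).

Definition subtree_at (t : tree) (p : seq bool) : tree :=
  if subt t p is Some s then s else t.

Definition colour_at (t : tree) (p : seq bool) : col := colour (subtree_at t p).

Definition parent (p : seq bool) : seq bool := take (size p).-1 p.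

Definition desc (q p : seq bool) : bool := take (size p) q == p.

Fixpoint nodes (t : tree) : seq (seq bool) :=
  [::] :: match t with
          | Leaf _ => [::]
          | Node l r => map (cons false) (nodes l) ++ map (cons true) (nodes r)
          end.

(* Type "r": a black/white node that is the root of a maximal subtree of its
   colour, i.e. it is the root or its parent has a different colour. *)
Definition is_r (t : tree) (p : seq bool) : bool :=
  (colour_at t p != G) &&
  ((p == [::]) || (colour_at t (parent p) != colour_at t p)).

(* Number of maximal black subtrees = number of black nodes of type r. *)
Definition num_max_black (t : tree) : nat :=
  count (fun p => (colour_at t p == B) && is_r t p) (nodes t).

Definition compatible (t : tree) : Prop := num_max_black t <= 1.

(* Pruning the subtree at u (u non-root): parent of u is replaced by the sibling. *)
Fixpoint prune (t : tree) (u : seq bool) : tree :=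
  match t, u with
  | Node l r, [:: b] => if b then l else r
  | Node l r, b :: u' => if b then Node l (prune r u') else Node (prune l u') r
  | _, _ => t
  end.

(* Regrafting s onto the branch above the node at path q:
   a new node with children (subtree at q) and s replaces the subtree at q. *)
Fixpoint graft (t : tree) (q : seq bool) (s : tree) : tree :=
  match q, t with
  | [::], _ => Node t s
  | b :: q', Node l r => if b then Node l (graft r q' s) else Node (graft l q' s) r
  | _ :: _, Leaf _ => t
  end.

(* Path of node v of T inside the pruned tree (v not in subtree of u, v <> pa(u)). *)
Definition moved_path (u v : seq bool) : seq bool :=
  let sib := rcons (parent u) (~~ last false u) in
  if desc v sib then parent u ++ drop (size sib) v else v.

Definition spr_ok (t : tree) (u v : seq bool) : bool :=
  [&& u != [::], is_node t u, is_node t v, v != u, v != parent u & ~~ desc v u].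

Definition spr (t : tree) (u v : seq bool) : tree :=
  graft (prune t u) (moved_path u v) (subtree_at t u).

(* Main.v *)
Require Import Defs.
From mathcomp Require Import all_boot.
From mathcomp Require Import zify.


Fixpoint g (t : tree) : nat :=
  match t with
  | Leaf b => nat_of_bool b
  | Node l r => if (colour l == B) && (colour r == B) then 1 else g l + g r
  end.

Lemma colourN_B l r : (colour (Node l r) == B) = (colour l == B) && (colour r == B).
Proof. by rewrite /=; case: (colour l); case: (colour r). Qed.

Lemma colourN_W l r : (colour (Node l r) == W) = (colour l == W) && (colour r == W).
Proof. by rewrite /=; case: (colour l); case: (colour r). Qed.

Lemma gN l r : colour (Node l r) != B -> g (Node l r) = g l + g r.
Proof. by rewrite colourN_B /= => /negbTE ->. Qed.

Lemma g_B t : colour t = B -> g t = 1.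
Proof.
case: t => [[]|l r] //= .
by move/eqP; rewrite -/(colour (Node l r)) colourN_B => ->.
Qed.

Lemma g_W t : colour t = W -> g t = 0.
Proof.
elim: t => [[]|l IHl r IHr] //= .
move/eqP; rewrite -/(colour (Node l r)) colourN_W => /andP[/eqP hl /eqP hr].
by rewrite hl IHl // IHr.
Qed.

Lemma g_G t : colour t = G -> 0 < g t.
Proof.
elim: t => [[]|l IHl r IHr] // E.
rewrite gN ?E //.
move: E => /=.
case El: (colour l); case Er: (colour r) => //= _.
all: try rewrite (g_B _ El).
all: try rewrite (g_B _ Er).
all: try (have := IHl El; lia).
all: try (have := IHr Er; lia).
all: lia.
Qed.

Fixpoint repl (t : tree) (p : seq bool) (s : tree) : tree :=
  match p, t with
  | [::], _ => s
  | b :: p', Node l r => if b then Node l (repl r p' s) else Node (repl l p' s) r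
  | _ :: _, Leaf _ => t
  end.

Lemma repl_nil t s : repl t [::] s = s. Proof. by case: t. Qed.

Lemma colour_repl t p s s' : is_node t p -> colour s = colour s' ->
  colour (repl t p s) = colour (repl t p s').
Proof.
elim: p t => [|c p IH] [b|l r] //= H E; case: c H => H /=; by rewrite (IH _ H E).
Qed.

Lemma colour_repl_nB t p s : is_node t p -> colour s != B -> colour (repl t p s) != B.
Proof.
elim: p t => [|c p IH] [b|l r] //= H E; case: c H => H; rewrite colourN_B;
  have := IH _ H E; by move/negbTE => ->; rewrite ?andbF.
Qed.

Lemma L0 t p s : is_node t p -> colour s = B -> g (repl t p s) = g (repl t p (Leaf true)).
Proof.
elim: p t => [|c p IH] t H E; first by rewrite !repl_nil (g_B _ E).
case: t H => [b|l r] //= H.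
case: c H => H /=.
- by rewrite (IH _ H E) (colour_repl r p s (Leaf true) H E).
- by rewrite (IH _ H E) (colour_repl l p s (Leaf true) H E).
Qed.

Lemma L1 t p s : is_node t p -> colour s != B -> g (repl t p s) = g s + g (repl t p (Leaf false)).
Proof.
elim: p t => [|c p IH] t H E; first by rewrite !repl_nil addn0.
case: t H => [b|l r] //= H.
case: c H => H /=.
- have h1 := colour_repl_nB r p s H E.
  have h2 : colour (repl r p (Leaf false)) != B by apply: colour_repl_nB.
  rewrite (negbTE h1) (negbTE h2) !andbF (IH _ H E); lia.
- have h1 := colour_repl_nB l p s H E.
  have h2 : colour (repl l p (Leaf false)) != B by apply: colour_repl_nB.
  rewrite (negbTE h1) (negbTE h2) /= (IH _ H E); lia.
Qed.

Lemma L2 t p : is_node t p -> g (repl t p (Leaf true)) <= (g (repl t p (Leaf false))).+1.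
Proof.
elim: p t => [|c p IH] t H; first by rewrite !repl_nil.
case: t H => [b|l r] //= H.
case: c H => H /=.
- have h2 : colour (repl r p (Leaf false)) != B by apply: colour_repl_nB.
  rewrite (negbTE h2) andbF; have := IH _ H; case: ifP => _; lia.
- have h2 : colour (repl l p (Leaf false)) != B by apply: colour_repl_nB.
  rewrite (negbTE h2) /=; have := IH _ H; case: ifP => _; lia.
Qed.

Lemma Lb t p s : is_node t p -> colour s = B -> 0 < g (repl t p s).
Proof.
elim: p t => [|c p IH] t H E; first by rewrite repl_nil (g_B _ E).
case: t H => [b|l r] //= H.
case: c H => H /=; have := IH _ H E; case: ifP => _; lia.
Qed.

Lemma U t p s : is_node t p -> g (repl t p s) <= g s + g (repl t p (Leaf false)).
Proof.
move=> H; case E: (colour s == B).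
- rewrite (L0 _ _ _ H (eqP E)) (g_B _ (eqP E)) add1n; exact: L2 _ _ H.
- by rewrite (L1 _ _ _ H (negbT E)).
Qed.

Lemma M t p V S : is_node t p -> g (repl t p V) <= g (repl t p (Node V S)).
Proof.
move=> H; case EV: (colour V == B).
- rewrite (L0 _ _ _ H (eqP EV)).
  case ES: (colour S == B).
  + rewrite (L0 _ _ (Node V S) H) //; apply/eqP; by rewrite colourN_B EV ES.
  + have hn : colour (Node V S) != B by rewrite colourN_B EV ES.
    rewrite (L1 _ _ _ H hn) gN // (g_B _ (eqP EV)); have := L2 _ _ H; lia.
- have hn : colour (Node V S) != B by rewrite colourN_B EV.
  rewrite (L1 _ _ _ H hn) gN // (L1 _ _ _ H (negbT EV)); lia.
Qed.


Lemma subt_nil t : subt t [::] = Some t. Proof. by case: t. Qed.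

Lemma subt_rcons t p c : subt t (rcons p c) =
  if subt t p is Some (Node l r) then Some (if c then r else l) else None.
Proof.
elim: p t => [|a p IH] [b|l r] //=; try by case: c; rewrite subt_nil.
all: by case: a; apply: IH.
Qed.

Lemma subt_cat t p w : subt t (p ++ w) = if subt t p is Some s then subt s w else None.
Proof.
elim: p t => [|a p IH] [b|l r] //=; try by case: a; apply: IH.
Qed.

Lemma repl_subt t p s : subt t p = Some s -> repl t p s = t.
Proof.
elim: p t => [|a p IH] [b|l r] //=; try by case=> ->.
by case: a => /IH ->.
Qed.

Lemma subt_repl_cat t p s w : is_node t p -> subt (repl t p s) (p ++ w) = subt s w.
Proof.
elim: p t => [|a p IH] [b|l r] //=; try by case: a => /IH.
Qed.

Lemma subt_repl_self t q Z : is_node t q -> subt (repl t q Z) q = Some Z.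
Proof. by move=> H; rewrite -[q in subt _ q]cats0 subt_repl_cat // subt_nil. Qed.

Lemma repl_cat t q w s V : subt t q = Some V -> repl t (q ++ w) s = repl t q (repl V w s).
Proof.
elim: q t => [|a q IH] [b|l r] //=; try by case=> <-; case: w => [|[] ?].
all: by case: a => /IH ->.
Qed.

Lemma subt_repl_disj t p q s : ~~ prefix q p -> ~~ prefix p q -> subt (repl t p s) q = subt t q.
Proof.
elim: p t q => [|a p IH] t [|c q] //=; rewrite ?prefix0s //.
case: t => [b|l r] //= H1 H2.
case: a H1 H2 => /=; case: c => //= H1 H2; exact: IH.
Qed.

Lemma repl_rcons t q c s l r : subt t q = Some (Node l r) ->
  repl t (rcons q c) s = repl t q (if c then Node l s else Node s r).
Proof. move=> H; rewrite -cats1 (repl_cat _ _ _ _ _ H) /=; by case: c; rewrite repl_nil. Qed.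

Lemma prune_eq T pp b l r : subt T pp = Some (Node l r) ->
  prune T (rcons pp b) = repl T pp (if b then l else r).
Proof.
elim: pp T => [|a pp IH] [x|L R] //=; first by case=> -> ->.
have : rcons pp b <> [::] by case: pp {IH}.
case E: (rcons pp b) => [//|y ys] _.
by case: a => /IH; rewrite E => ->.
Qed.

Lemma graft_eq t q s V : subt t q = Some V -> graft t q s = repl t q (Node V s).
Proof.
elim: q t => [|a q IH] [b|l r] //=; try by case=> ->.
by case: a => /IH ->.
Qed.

Lemma colour_sub_B Q w P : colour Q = B -> subt Q w = Some P -> colour P = B.
Proof.
elim: w Q => [|a w IH] [b|l r] //=; try by move=> ? [<-].
move/eqP; rewrite -/(colour (Node l r)) colourN_B => /andP[/eqP hl /eqP hr].
by case: a; apply: IH.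
Qed.

Lemma parent_rcons p c : parent (rcons p c) = p.
Proof. by rewrite /parent size_rcons -cats1 take_size_cat. Qed.

Lemma moved_rcons pp b q : moved_path (rcons pp b) q =
  if prefix (rcons pp (~~b)) q then pp ++ drop (size pp).+1 q else q.
Proof. by rewrite /moved_path parent_rcons last_rcons /desc -prefixE size_rcons. Qed.

Lemma desc_prefix q p : desc q p = prefix p q.
Proof. by rewrite /desc prefixE. Qed.

Lemma classify (pp q : seq bool) (b : bool) :
  [\/ prefix q pp, prefix (rcons pp b) q, exists w, q = rcons pp (~~b) ++ w
    | ~~ prefix q pp /\ ~~ prefix pp q].
Proof.
case H: (prefix pp q).
- case/prefixP: H => w ->.
  case: w => [|c w]; first by constructor 1; rewrite cats0 prefix_refl.
  case: (c =P b) => [->|/eqP hc].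
  + by constructor 2; apply/prefixP; exists w; rewrite cat_rcons.
  + constructor 3; exists w; rewrite cat_rcons; congr (_ ++ _ :: _).
    by case: c b hc => [] [].
- case H2: (prefix q pp); first by constructor 1.
  by constructor 4.
Qed.


Lemma parent_cons a p : p != [::] -> parent (a :: p) = a :: parent p.
Proof. by case: p => // x p _; rewrite /parent /=. Qed.

Lemma is_node_parent t p : is_node t p -> is_node t (parent p).
Proof.
case/lastP: p => [//|q c]; rewrite parent_rcons /is_node subt_rcons.
by case: (subt t q) => [[]|].
Qed.

Lemma nodes_valid t p : p \in nodes t -> is_node t p.
Proof.
elim: t p => [b|l IHl r IHr] p /=.
- by rewrite inE => /eqP ->.
- rewrite inE; case/orP=> [/eqP ->|]; first by [].
  rewrite mem_cat => /orP[] /mapP[q hq ->] /=; [exact: IHl | exact: IHr].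
Qed.

Lemma colour_at_cons l r (a : bool) p : is_node (if a then r else l) p ->
  colour_at (Node l r) (a :: p) = colour_at (if a then r else l) p.
Proof.
rewrite /colour_at /subtree_at /is_node /=.
by case: (subt (if a then r else l) p).
Qed.

Definition predb t p := (colour_at t p == B) && is_r t p.

Lemma pred_cons l r (a : bool) p : p != [::] -> is_node (if a then r else l) p ->
  predb (Node l r) (a :: p) = predb (if a then r else l) p.
Proof.
move=> hp hv; rewrite /predb /is_r colour_at_cons // parent_cons //.
rewrite colour_at_cons; last exact: is_node_parent.
by rewrite (negbTE hp).
Qed.

Lemma nodes_tl_nonnil t : all (fun p => p != [::]) (behead (nodes t)).
Proof.
case: t => [b|l r] //=; rewrite all_cat !all_map.
by apply/andP; split; apply/allP.
Qed.

Lemma count_side l r (a : bool) :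
  count (predb (Node l r)) (map (cons a) (nodes (if a then r else l))) =
  predb (Node l r) [:: a] + count (predb (if a then r else l)) (behead (nodes (if a then r else l))).
Proof.
set t := if a then r else l.
have : nodes t = [::] :: behead (nodes t) by case: (t).
move=> E; rewrite E /= count_map; congr (_ + _).
apply: eq_in_count => p hp /=.
rewrite pred_cons //.
- by move/allP: (nodes_tl_nonnil t) => /(_ p hp).
- apply: nodes_valid; rewrite E inE hp orbT //.
Qed.

Lemma count_tl t : num_max_black t = predb t [::] + count (predb t) (behead (nodes t)).
Proof. by case: t. Qed.

Lemma nmb_g t : num_max_black t = g t.
Proof.
elim: t => [[]|l IHl r IHr] //.
rewrite /num_max_black /= count_cat.
have := count_side l r false; have := count_side l r true => /= -> ->.
move: IHl IHr; rewrite !count_tl => IHl IHr.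
have -> : count (predb l) (behead (nodes l)) = g l - predb l [::] by lia.
have -> : count (predb r) (behead (nodes r)) = g r - predb r [::] by lia.
have hl : predb l [::] <= g l by lia.
have hr : predb r [::] <= g r by lia.
move: hl hr.
rewrite /predb /is_r /colour_at /subtree_at /= !subt_nil /parent /=.

case El: (colour l); case Er: (colour r) => /=;
  rewrite ?(g_B _ El) ?(g_B _ Er); lia.
Qed.


Lemma ptrans {x y z : seq bool} : prefix x y -> prefix y z -> prefix x z.
Proof. move=> h1 h2; exact: (prefix_trans h1 h2). Qed.

Lemma prefix_size {s1 s2 : seq bool} : prefix s1 s2 -> size s1 <= size s2.
Proof. by case/prefixP=> w ->; rewrite size_cat leq_addr. Qed.

Lemma prefix_rcons_inv (s q : seq bool) c : prefix s (rcons q c) -> (s = rcons q c) \/ prefix s q.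
Proof.
elim: q s => [|x q IH] [|y s] //=; try by right.
- case: s => [|z s] /=; last by rewrite andbF.
  by rewrite andbT => /eqP ->; left.
- case/andP=> /eqP -> /IH [->|h]; [by left | right; by rewrite eqxx].
Qed.

Lemma subt_sib T pp l r (b : bool) w : subt T pp = Some (Node l r) ->
  subt T (rcons pp (~~ b) ++ w) = subt (if b then l else r) w.
Proof.
by move=> E; rewrite cat_rcons subt_cat E /=; case: b.
Qed.

Lemma moved_sib pp b w : moved_path (rcons pp b) (rcons pp (~~ b) ++ w) = pp ++ w.
Proof.
rewrite moved_rcons prefix_prefix; congr (_ ++ _).
rewrite cat_rcons; elim: pp => [|? ? IH] /=; [exact: drop0 | exact: IH].
Qed.

Lemma moved_spec T pp b l r q : subt T pp = Some (Node l r) -> is_node T q -> q != pp ->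
  ~~ prefix (rcons pp b) q ->
  exists V', subt (repl T pp (if b then l else r)) (moved_path (rcons pp b) q) = Some V' /\
   (colour (if b then l else r) != B -> colour_at T q != B -> colour V' != B).
Proof.
move=> E hq hne hnd.
have hpp : is_node T pp by rewrite /is_node E.
case: (classify pp q b) => [ha|hb|[w hw]|[h1 h2]].
- case/prefixP: (ha) => w hw.
  case Eq: (subt T q) => [V|]; last by rewrite /is_node Eq in hq.
  have hVw : subt V w = Some (Node l r) by rewrite hw subt_cat Eq in E.
  have hmv : moved_path (rcons pp b) q = q.
    rewrite moved_rcons; case: ifP => // hp.
    have := prefix_size (ptrans hp ha); rewrite size_rcons; lia.
  rewrite hmv hw (repl_cat _ _ _ _ _ Eq) subt_repl_self //.
  eexists; split; first reflexivity.
  move=> hX _; apply: colour_repl_nB => //; by rewrite /is_node hVw.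
- by rewrite hb in hnd.
- rewrite hw moved_sib subt_repl_cat //.
  move: hq; rewrite /is_node /colour_at /subtree_at hw (subt_sib _ _ _ _ _ _ E).
  case: (subt (if b then l else r) w) => [V|] // _.
  by exists V.
- have hmv : moved_path (rcons pp b) q = q.
    rewrite moved_rcons; case: ifP => // hp.
    by move: h2; rewrite (ptrans (prefix_rcons pp (~~b)) hp).
  rewrite hmv subt_repl_disj //.
  move: hq; rewrite /is_node /colour_at /subtree_at.
  case: (subt T q) => [V|] // _.
  by exists V.
Qed.

Lemma moved_out T pp b l r q c : subt T pp = Some (Node l r) -> ~~ prefix q pp ->
  ~~ prefix (rcons pp b) q ->
  subt (repl T pp (if b then l else r)) (moved_path (rcons pp b) q) = subt T q /\
  moved_path (rcons pp b) (rcons q c) = rcons (moved_path (rcons pp b) q) c.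
Proof.
move=> E h1 hnd.
have hpp : is_node T pp by rewrite /is_node E.
case: (classify pp q b) => [ha|hb|[w hw]|[_ h2]].
- by rewrite ha in h1.
- by rewrite hb in hnd.
- rewrite hw moved_sib subt_repl_cat // (subt_sib _ _ _ _ _ _ E); split=> //.
  by rewrite !rcons_cat moved_sib.
- have hmv : moved_path (rcons pp b) q = q.
    rewrite moved_rcons; case: ifP => // hp.
    by move: h2; rewrite (ptrans (prefix_rcons pp (~~b)) hp).
  rewrite hmv subt_repl_disj //; split=> //.
  rewrite moved_rcons; case: ifP => // hp.
  case: (prefix_rcons_inv _ _ _ hp) => [/rcons_inj [hq _]|hp2].
  + by move: h1; rewrite -hq prefix_refl.
  + by move: h2; rewrite (ptrans (prefix_rcons pp (~~b)) hp2).
Qed.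


Lemma node_XS l r (b : bool) :
  colour (Node l r) = colour (Node (if b then l else r) (if b then r else l)) /\
  g (Node l r) = g (Node (if b then l else r) (if b then r else l)).
Proof.
case: b => //=; split.
- by case: (colour l); case: (colour r).
- by rewrite andbC addnC.
Qed.

Lemma nonnil_rcons (s : seq bool) : s != [::] -> exists q c, s = rcons q c.
Proof. by case/lastP: s => // q c _; exists q, c. Qed.

Ltac fin := repeat match goal with
  | H : ?P |- _ => lazymatch P with
                   | is_true (leq _ _) => fail
                   | @eq nat _ _ => fail
                   | _ => match type of P with Prop => clear H end end
  end; lia.

Theorem theorem1 (T : tree) (u v : seq bool) :
  1 < num_max_black T ->
  spr_ok T u v ->
  compatible (spr T u v) ->
  [\/ colour_at T u = B /\ is_r T u /\ colour_at T v = B,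
      colour_at T u = W /\ is_r T u /\ colour_at T v = W,
      colour_at T u = W /\ is_r T u /\ colour_at T v = G
    | colour_at T u = W /\ is_r T u /\ colour_at T v = B /\ is_r T v].
Proof.
rewrite /compatible !nmb_g => H1.
case/andP=> hun /andP[hu /andP[hv /andP[hvu /andP[hvp hnd]]]].
move: hun hu hvu hvp hnd H1.
case/lastP: u => [//|pp b] _ hu hvu hvp hnd H1.
rewrite parent_rcons in hvp; rewrite desc_prefix in hnd.
have [l [r E]] : exists l r, subt T pp = Some (Node l r).
  move: hu; rewrite /is_node subt_rcons.
  case: (subt T pp) => [[x|l r]|] //; by exists l, r.
set S := if b then r else l.
set X := if b then l else r.
have hpp : is_node T pp by rewrite /is_node E.
have hS : colour_at T (rcons pp b) = colour S.
  by rewrite /colour_at /subtree_at subt_rcons E.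
have hr : is_r T (rcons pp b) = (colour S != G) && (colour (Node l r) != colour S).
  rewrite /is_r hS parent_rcons.
  have -> : (rcons pp b == [::]) = false by case: (pp).
  by rewrite /= /colour_at /subtree_at E.
have hsub : subtree_at T (rcons pp b) = S by rewrite /subtree_at subt_rcons E.
have [hcP hgP] := node_XS l r b.
rewrite -/S -/X in hcP hgP.
have gT : g T = g (repl T pp (Node l r)) by rewrite repl_subt.
have [V' [hV' hV'c]] := moved_spec T pp b l r v E hv hvp hnd.
rewrite -/X in hV' hV'c.
set T' := repl T pp X in hV'.
set v' := moved_path (rcons pp b) v in hV'.
have hR : spr T (rcons pp b) v = repl T' v' (Node V' S).
  by rewrite /spr hsub (prune_eq _ _ _ _ _ E) -/X -/T' (graft_eq _ _ _ _ hV').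
have hT' : T' = repl T' v' V' by rewrite repl_subt.
have hv' : is_node T' v' by rewrite /is_node hV'.
rewrite hR; rewrite hS hr => H2.
set AC := g (repl T pp (Leaf false)).
set AD := g (repl T' v' (Leaf false)).
have hM := M T' v' V' S hv'.
rewrite -hT' in hM.
case ES: (colour S).
-
  case EP: (colour (Node l r) == B).
  + exfalso.
    have EX : colour X = B.
      by move: EP; rewrite hcP colourN_B => /andP[/eqP -> _].
    have h1 := L0 _ _ _ hpp (eqP EP).
    have h2 := L0 _ _ _ hpp EX.
    rewrite -/T' in h2; fin.
  + have EX : colour X != B.
      by move: EP; rewrite hcP colourN_B ES eqxx andbT => ->.
    case EV: (colour_at T v == B).
    * by constructor 1; rewrite (eqP EV).
    * exfalso.
      have hV'n := hV'c EX (negbT EV).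
      have e1 := L1 _ _ _ hpp (negbT EP).
      have e2 : g (Node l r) = g X + g S.
        by rewrite hgP gN // -hcP; exact: negbT.
      have e3 := L1 _ _ _ hpp EX; rewrite -/T' in e3.
      have e4 : g T' = g V' + AD by rewrite {1}hT' (L1 _ _ _ hv' hV'n).
      have hn : colour (Node V' S) != B by rewrite colourN_B (negbTE hV'n).
      have e5 := L1 _ _ _ hv' hn.
      have e6 : g (Node V' S) = g V' + g S by rewrite gN.
      have e7 := g_B _ ES.
      fin.
-
  case EP: (colour (Node l r) == W).
  + exfalso.
    have EX : colour X = W.
      by move: EP; rewrite hcP colourN_W => /andP[/eqP -> _].
    have hPn : colour (Node l r) != B by rewrite (eqP EP).
    have e1 := L1 _ _ _ hpp hPn.
    have e2 := g_W _ (eqP EP).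
    have hXn : colour X != B by rewrite EX.
    have e3 := L1 _ _ _ hpp hXn; rewrite -/T' in e3.
    have e4 := g_W _ EX.
    fin.
  + case EV: (colour_at T v).
    * case Er: (is_r T v); first by constructor 4.
      exfalso.
      have hvn : v != [::].
        apply/eqP => hv0; move: Er; by rewrite /is_r EV hv0 eqxx.
      have [qq [c hvq]] := nonnil_rcons _ hvn.
      have Epar : colour_at T qq = B.
        move: Er; rewrite /is_r EV hvq parent_rcons /=.
        have -> : (rcons qq c == [::]) = false by case: (qq).
        by move/negbFE/eqP.
      have [l2 [r2 E2]] : exists l2 r2, subt T qq = Some (Node l2 r2).
        move: hv; rewrite hvq /is_node subt_rcons.
        case: (subt T qq) => [[x|l2 r2]|] //; by exists l2, r2.
      have hQB : colour (Node l2 r2) = B by move: Epar; rewrite /colour_at /subtree_at E2.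
      have [hl2 hr2] : colour l2 = B /\ colour r2 = B.
        by move/eqP: (hQB); rewrite colourN_B => /andP[/eqP -> /eqP ->].
      have h1 : ~~ prefix qq pp.
        apply/negP => /prefixP [w hw].
        move: E; rewrite hw subt_cat E2 => /(colour_sub_B _ _ _ hQB).
        by rewrite hcP => /eqP; rewrite colourN_B ES andbF.
      have h2 : ~~ prefix (rcons pp b) qq.
        apply/negP => hp; move: hnd.
        by rewrite hvq (ptrans hp (prefix_rcons qq c)).
      have [hsq hmq] := moved_out T pp b l r qq c E h1 h2.
      rewrite -/X -/T' E2 in hsq.
      set qq' := moved_path (rcons pp b) qq in hsq hmq.
      have hv'e : v' = rcons qq' c by rewrite /v' hvq hmq.
      have hVe : V' = if c then r2 else l2.
        by move: hV'; rewrite hv'e subt_rcons hsq => -[<-].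
      have hRe := repl_rcons _ _ c (Node V' S) _ _ hsq.
      rewrite -hv'e in hRe.
      have hq' : is_node T' qq' by rewrite /is_node hsq.
      set N := (if c then Node l2 (Node V' S) else Node (Node V' S) r2) in hRe.
      have hNn : colour N != B /\ g N = 2.
        rewrite /N hVe; case: (c).
        - have hn : colour (Node r2 S) != B by rewrite colourN_B ES andbF.
          have hn2 : colour (Node l2 (Node r2 S)) != B by rewrite colourN_B (negbTE hn) andbF.
          by split=> //; rewrite gN // gN // (g_B _ hl2) (g_B _ hr2) (g_W _ ES).
        - have hn : colour (Node l2 S) != B by rewrite colourN_B ES andbF.
          have hn2 : colour (Node (Node l2 S) r2) != B by rewrite colourN_B (negbTE hn).
          by split=> //; rewrite gN // gN // (g_B _ hl2) (g_B _ hr2) (g_W _ ES).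
      case: hNn => hNn gN2.
      have e := L1 _ _ _ hq' hNn.
      rewrite -hRe in e.
      fin.
    * by constructor 2.
    * by constructor 3.
-
  exfalso.
  have EP : colour (Node l r) != B by rewrite hcP colourN_B ES andbF.
  have e1 := L1 _ _ _ hpp EP.
  have e2 : g (Node l r) = g X + g S by rewrite hgP gN // -hcP.
  have gS := g_G _ ES.
  have hn : colour (Node V' S) != B by rewrite colourN_B ES andbF.
  have e5 := L1 _ _ _ hv' hn.
  have e6 : g (Node V' S) = g V' + g S by rewrite gN.
  have e4 := U _ _ V' hv'; rewrite -hT' in e4.
  case EX: (colour X == B).
  + have := Lb _ _ _ hpp (eqP EX); rewrite -/T'; fin.
  + have e3 := L1 _ _ _ hpp (negbT EX); rewrite -/T' in e3; fin.
Qed.
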